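(* Let $A\in\mathbb{R}^{n\times m}$ with $n<m$ have nonzero columns $\alpha_1,\dots,\alpha_m$, let $c_{ij}=\langle\alpha_i,\alpha_j\rangle$, $\nu(i)=\max_{j\neq i}\frac{|c_{ij}|}{c_{ii}}$, and let $s$ be an integer with $1\le s\le m$. Let $k_{max}=\max_{\mathcal{T}\subseteq[m],|\mathcal{T}|=s}\Lambda_{max}(A_{\mathcal{T}}^TA_{\mathcal{T}})$ and $k_{min}=\min_{\mathcal{T}\subseteq[m],|\mathcal{T}|=s}\Lambda_{min}(A_{\mathcal{T}}^TA_{\mathcal{T}})$. Then $$\frac{k_{min}}{k_{max}}\ge\min_{h\neq l}\frac{c_{hh}}{c_{ll}}-2(s-1)\max_{i}\nu(i).$$
   Context: $[m]=\{1,\dots,m\}$. For $\mathcal{T}\subseteq[m]$, $A_{\mathcal{T}}$ is the submatrix of $A$ formed by the columns indexed by $\mathcal{T}$. $\Lambda_{max}(B)$, $\Lambda_{min}(B)$ denote the largest and smallest eigenvalues of a symmetric matrix $B$. The minimum is over $h,l\in[m]$ with $h\neq l$, and the maxima in $\nu(i)$ are over $j\in[m]\setminus\{i\}$. *)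

(* Defs.v *)
From mathcomp Require Import all_boot all_order all_algebra.
From mathcomp Require Import boolp classical_sets reals.
Set Implicit Arguments. Unset Strict Implicit. Unset Printing Implicit Defensive.
Import Order.TTheory GRing.Theory Num.Theory.
Local Open Scope ring_scope.
Local Open Scope classical_set_scope.

Section Defs.
Variable R : realType.

(* For a real symmetric matrix this set is finite and
   nonempty, so these are the usual max / min eigenvalues. *)
Definition lambda_max (k : nat) (B : 'M[R]_k) : R := sup [set a : R | eigenvalue B a].
Definition lambda_min (k : nat) (B : 'M[R]_k) : R := inf [set a : R | eigenvalue B a].

Definition colsubset (n m : nat) (A : 'M[R]_(n, m)) (T : {set 'I_m}) : 'M[R]_(n, #|T|) :=
  colsub (fun j : 'I_#|T| => enum_val j) A.

Definition cc (n m : nat) (A : 'M[R]_(n, m)) (i j : 'I_m) : R := (A^T *m A) i j.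

Definition nu (n m : nat) (A : 'M[R]_(n, m)) (i : 'I_m) : R :=
  sup [set `|cc A i j| / cc A i i | j in [set j : 'I_m | j != i]].

Definition kmax (n m : nat) (A : 'M[R]_(n, m)) (s : nat) : R :=
  sup [set lambda_max ((colsubset A T)^T *m colsubset A T)
       | T in [set T : {set 'I_m} | #|T| = s]].

Definition kmin (n m : nat) (A : 'M[R]_(n, m)) (s : nat) : R :=
  inf [set lambda_min ((colsubset A T)^T *m colsubset A T)
       | T in [set T : {set 'I_m} | #|T| = s]].

End Defs.

(* Main.v *)
Require Import Defs.
From mathcomp Require Import all_boot all_order all_algebra.
From mathcomp Require Import boolp classical_sets reals.
From mathcomp Require Import complex ring lra.
Import Order.TTheory GRing.Theory Num.Theory.
Local Open Scope ring_scope.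
Section S.
Variable R : rcfType.
Lemma Re_sum (I : finType) (f : I -> R[i]) : complex.Re (\sum_i f i) = \sum_i complex.Re (f i).
Proof. by apply: (big_morph _ (id1 := 0)) => // [[x y] [u w]]. Qed.
Lemma Im_sum (I : finType) (f : I -> R[i]) : complex.Im (\sum_i f i) = \sum_i complex.Im (f i).
Proof. by apply: (big_morph _ (id1 := 0)) => // [[x y] [u w]]. Qed.

Lemma sym_eigen k (G : 'M[R]_k) : (0 < k)%N -> G^T = G -> exists a, eigenvalue G a.
Proof.
move=> k0 GT.
pose Gc := map_mx (real_complex R) G.
have [z rz] : exists z, root (char_poly Gc) z.
  by apply/closed_rootP; rewrite size_char_poly; case: (k) k0.
move: rz; rewrite -eigenvalue_root_char => /eigenvalueP [v vG vnz].
pose a := map_mx (@complex.Re R) v. pose b := map_mx (@complex.Im R) v.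
have Ha : a *m G = complex.Re z *: a - complex.Im z *: b.
  apply/rowP => j; move/rowP: vG => /(_ j); rewrite !mxE => vGj.
  have := congr1 (@complex.Re R) vGj; rewrite Re_sum => E.
  transitivity (complex.Re (z * v 0 j)); last by case: (z) => p q /=; case: (v 0 j).
  rewrite -E; apply: eq_bigr => i _; rewrite !mxE.
  by case: (v 0 i) => p q /=; rewrite mulr0 subr0.
have Hb : b *m G = complex.Im z *: a + complex.Re z *: b.
  apply/rowP => j; move/rowP: vG => /(_ j); rewrite !mxE => vGj.
  have := congr1 (@complex.Im R) vGj; rewrite Im_sum => E.
  transitivity (complex.Im (z * v 0 j)); last first.
    by case: (z) => p q /=; case: (v 0 j) => p' q' /=; rewrite addrC.
  rewrite -E; apply: eq_bigr => i _; rewrite !mxE.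
  by case: (v 0 i) => p q /=; rewrite mulr0 add0r.
have ab : (a *m b^T) 0 0 = (b *m a^T) 0 0.
  by rewrite !mxE; apply: eq_bigr => i _; rewrite !mxE mulrC.
have sym : (a *m G *m b^T) 0 0 = (b *m G *m a^T) 0 0.
  transitivity ((a *m G *m b^T)^T 0 0); first by rewrite [RHS]mxE.
  by rewrite !trmx_mul trmxK GT mulmxA.
have Hpos : 0 < (a *m a^T) 0 0 + (b *m b^T) 0 0.
  rewrite !mxE -big_split /=.
  have Hge : forall i, true -> 0 <= a 0 i * a^T i 0 + b 0 i * b^T i 0.
    by move=> i _; rewrite !mxE -!expr2 addr_ge0 // sqr_ge0.
  rewrite lt_def; apply/andP; split; last by apply: sumr_ge0.
  apply/negP => /eqP H0; have H := psumr_eq0P Hge H0.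
  move/negP: vnz; apply; apply/eqP/rowP => i; rewrite mxE.
  have := H i isT; rewrite !mxE -!expr2 => /eqP; rewrite paddr_eq0 ?sqr_ge0 // !sqrf_eq0.
  by case: (v 0 i) => p q /= /andP [/eqP -> /eqP ->].
have Iz : complex.Im z = 0.
  move: sym Hpos; rewrite Ha Hb !mulmxDl !mulNmx -!scalemxAl.
  move: ab; move: (a *m b^T) (b *m a^T) (a *m a^T) (b *m b^T) => P Q PA PB ab.
  rewrite !mxE ab => E Hpos.
  have : complex.Im z * (PA 0 0 + PB 0 0) = 0 by rewrite mulrDr; lra.
  by move/eqP; rewrite mulf_eq0 (gt_eqF Hpos) orbF => /eqP.
move: Ha Hb; rewrite Iz !scale0r subr0 add0r => Ha Hb.
exists (complex.Re z); apply/eigenvalueP.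
have [a0|anz] := eqVneq a 0.
  exists b => //; apply/negP => /eqP b0; move: Hpos.
  by rewrite a0 b0 !mul0mx mxE addr0 ltxx.
by exists a.
Qed.
End S.
Section G2.
Variable R : realFieldType.
Lemma gersh k (G : 'M[R]_k) (a : R) (w : 'rV[R]_k) : w *m G = a *: w -> w != 0 ->
  exists p : 'I_k, `|a - G p p| <= \sum_(i | i != p) `|G i p|.
Proof.
move=> wG wnz.
have [i0 _] : exists i0 : 'I_k, true.
  case: k G w wG wnz => [|k'] G w _ wnz; last by exists ord0.
  by move/negP: wnz; case; apply/eqP/rowP => [[]].
have [p _ Hp] := @arg_maxP _ _ _ i0 xpredT (fun j => `|w 0 j|) isT.
exists p.
have wp0 : 0 < `|w 0 p|.
  rewrite normr_gt0; apply/negP => /eqP wp.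
  move/negP: wnz; apply; apply/eqP/rowP => j; rewrite mxE.
  by apply/eqP; rewrite -normr_le0; have := Hp j isT; rewrite wp normr0.
have E : (a - G p p) * w 0 p = \sum_(i | i != p) w 0 i * G i p.
  move/rowP: wG => /(_ p); rewrite !mxE (bigD1 p) //= => H; rewrite mulrBl -H; ring.
rewrite -(ler_pM2r wp0) -normrM E.
apply: le_trans (ler_norm_sum _ _ _) _.
rewrite mulr_suml; apply: ler_sum => i _.
by rewrite normrM mulrC ler_wpM2l //; exact: Hp.
Qed.

Lemma dot_ge0 k (u : 'rV[R]_k) : 0 <= (u *m u^T) 0 0.
Proof. by rewrite mxE; apply: sumr_ge0 => i _; rewrite mxE -expr2 sqr_ge0. Qed.

Lemma dot_gt0 k (u : 'rV[R]_k) : u != 0 -> 0 < (u *m u^T) 0 0.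
Proof.
move=> unz; rewrite lt_def dot_ge0 andbT; apply/negP => /eqP.
rewrite mxE => H0.
have Hge : forall i, true -> 0 <= u 0 i * u^T i 0 by move=> i _; rewrite mxE -expr2 sqr_ge0.
have H := psumr_eq0P Hge H0.
move/negP: unz; apply; apply/eqP/rowP => i; rewrite mxE.
by have := H i isT; rewrite mxE -expr2 => /eqP; rewrite sqrf_eq0 => /eqP.
Qed.

Lemma psd n k (B : 'M[R]_(n, k)) (a : R) (w : 'rV[R]_k) :
  w *m (B^T *m B) = a *: w -> w != 0 -> 0 <= a.
Proof.
move=> wG wnz.
have E : (w *m (B^T *m B) *m w^T) 0 0 = a * (w *m w^T) 0 0.
  by rewrite wG -scalemxAl mxE.
have E2 : w *m (B^T *m B) *m w^T = (w *m B^T) *m (w *m B^T)^T.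
  by rewrite trmx_mul trmxK !mulmxA.
have := @dot_ge0 _ (w *m B^T); rewrite -E2 E.
by rewrite pmulr_lge0 // dot_gt0.
Qed.
End G2.

Section Bnd.
Local Open Scope classical_set_scope.
Variable R : realType.

Lemma bnd_infsup (S : set R) (lo hi : R) : S !=set0 ->
  (forall a, S a -> lo <= a <= hi) ->
  [/\ lo <= inf S, sup S <= hi & forall a, S a -> inf S <= a <= sup S].
Proof.
move=> S0 H; split.
- by apply: lb_le_inf => // a /H /andP[].
- by apply: ge_sup => // a /H /andP[].
- move=> a Sa; apply/andP; split.
    by apply: ge_inf => //; exists lo => b /H /andP[].
  by apply: ub_le_sup => //; exists hi => b /H /andP[].
Qed.

Lemma fin_ub (T : finType) (f : T -> R) (P : set T) : has_ubound (f @` P).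
Proof.
exists (\sum_t `|f t|) => _ [t _ <-].
rewrite (bigD1 t) //=; apply: le_trans (ler_norm _) _.
by rewrite lerDl sumr_ge0.
Qed.

Lemma fin_lb (T : finType) (f : T -> R) (P : set T) : has_lbound (f @` P).
Proof.
exists (- \sum_t `|f t|) => _ [t _ <-].
rewrite (bigD1 t) //=.
have h1 := ler_norm (- f t); rewrite normrN in h1.
have h2 : 0 <= \sum_(i | i != t) `|f i| by rewrite sumr_ge0.
lra.
Qed.
End Bnd.

Arguments sym_eigen {R k}. Arguments gersh {R k}. Arguments psd {R n k}.
Arguments dot_gt0 {R k}. Arguments bnd_infsup {R}. Arguments fin_ub {R T}. Arguments fin_lb {R T}.

Lemma cc_sym (R : realType) n m (A : 'M[R]_(n,m)) i j : cc A i j = cc A j i.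
Proof. by rewrite /cc !mxE; apply: eq_bigr => k _; rewrite !mxE mulrC. Qed.

Lemma GT_entry (R : realType) n m (A : 'M[R]_(n,m)) (T : {set 'I_m}) i j :
  ((colsubset A T)^T *m colsubset A T) i j = cc A (enum_val i) (enum_val j).
Proof. by rewrite /cc /colsubset !mxE; apply: eq_bigr => k _; rewrite !mxE. Qed.

Local Open Scope classical_set_scope.

Theorem theorem2 (R : realType) (n m : nat) (A : 'M[R]_(n, m)) (s : nat) :
  (n < m)%N ->
  (forall i : 'I_m, col i A != 0) ->
  (1 <= s <= m)%N ->
  kmin A s / kmax A s >=
    inf [set cc A hl.1 hl.1 / cc A hl.2 hl.2
         | hl in [set hl : 'I_m * 'I_m | hl.1 != hl.2]]
    - 2 * (s - 1)%N%:R * sup [set nu A i | i in [set: 'I_m]].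
Proof.
move=> nm colnz /andP[s1 sm].
have m0 : (0 < m)%N by apply: leq_ltn_trans nm.
have n0 : (0 < n)%N.
  case: n A colnz nm => // A colnz _; exfalso.
  by move/negP: (colnz (Ordinal m0)); apply; apply/eqP; exact: flatmx0.
have m2 : (1 < m)%N by apply: leq_ltn_trans n0 nm.
set c := fun i => cc A i i.
have cpos : forall i, 0 < c i.
  move=> i; have := @dot_gt0 _ _ ((col i A)^T).
  have -> : ((col i A)^T *m (col i A)^T^T) 0 0 = c i.
    by rewrite trmxK /c /cc !mxE; apply: eq_bigr => k _; rewrite !mxE.
  apply; by rewrite -trmx0 (inj_eq trmx_inj) colnz.
pose i0 := Ordinal m0. pose i1 := Ordinal m2.
have ex_ne : forall i : 'I_m, exists j, j != i.
  move=> i; case: (eqVneq i i0) => [->|ne]; last by exists i0; rewrite eq_sym.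
  by exists i1; apply/eqP => /(congr1 val).
have [imin _ Hmin] := @arg_minP _ _ _ i0 xpredT c isT.
have [imax _ Hmax] := @arg_maxP _ _ _ i0 xpredT c isT.
have Hmin' : forall j, c imin <= c j by move=> j; exact: Hmin.
have Hmax' : forall j, c j <= c imax by move=> j; exact: Hmax.
clear Hmin Hmax.
set cmin := c imin; set cmax := c imax.
have cmin0 : 0 < cmin by apply: cpos.
have cminmax : cmin <= cmax by apply: Hmax'.
set N := sup [set nu A i | i in [set: 'I_m]].
have nuN : forall i, nu A i <= N.
  move=> i; have H := ub_le_sup (fin_ub (nu A) setT); apply: H; by exists i.
have nu_ge : forall i j, j != i -> `|cc A i j| / c i <= nu A i.
  move=> i j ji; rewrite /nu.
  have H := ub_le_sup (fin_ub (fun j => `|cc A i j| / cc A i i) [set j | j != i]).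
  by apply: H; exists j.
have N0 : 0 <= N.
  have [j ji] := ex_ne i0; apply: le_trans (nuN i0); apply: le_trans (nu_ge _ _ ji).
  by rewrite divr_ge0 // ltW // cpos.
rewrite -mulrA; set x := (s - 1)%N%:R * N.
have x0 : 0 <= x by rewrite mulr_ge0.
set r0 := inf _.
have r0le : r0 <= cmin / cmax.
  have lb := ge_inf (fin_lb (fun hl : 'I_m * 'I_m => cc A hl.1 hl.1 / cc A hl.2 hl.2)
       [set hl | hl.1 != hl.2]).
  case: (eqVneq imin imax) => [e|ne]; last by apply: lb; exists (imin, imax).
  have [j ji] := ex_ne imin.
  have -> : cmax = c j by apply/eqP; rewrite eq_le Hmax' /cmax -e Hmin'.
  by apply: lb; exists (imin, j) => //=; rewrite eq_sym.
pose lo := Num.max 0 (cmin * (1 - x)). pose hi := cmax * (1 + x).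
have eig : forall T : {set 'I_m}, #|T| = s -> forall a,
    eigenvalue ((colsubset A T)^T *m colsubset A T) a -> lo <= a <= hi.
  move=> T Ts a /eigenvalueP [w wG wnz].
  have a0 := psd _ _ _ wG wnz.
  have [p Hp] := gersh _ _ _ wG wnz.
  set e := enum_val p.
  have Hs : \sum_(i | i != p) `|((colsubset A T)^T *m colsubset A T) i p| <= x * c e.
    apply: (@le_trans _ _ (\sum_(i | i != p) N * c e)).
      apply: ler_sum => i ip; rewrite GT_entry cc_sym -ler_pdivrMr ?cpos //.
      apply: le_trans (nuN e); apply: nu_ge.
      by apply/negP => /eqP /enum_val_inj ie; move: ip; rewrite ie eqxx.
    by rewrite sumr_const cardC1 card_ord Ts /x -subn1 -mulrA mulr_natl.
  rewrite GT_entry -/e in Hp.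
  have Hd := le_trans Hp Hs.
  move: Hd; rewrite ler_norml => /andP [d1 d2].
  have ce1 : cmin <= c e by apply: Hmin'.
  have ce2 : c e <= cmax by apply: Hmax'.
  have cae : cc A e e = c e by [].
  rewrite cae in d1 d2.
  apply/andP; split.
    rewrite /lo ge_max a0 /=.
    case: (lerP x 1) => hx.
      have : 0 <= (c e - cmin) * (1 - x) by rewrite mulr_ge0 // ?subr_ge0.
      nra.
    have : cmin * (1 - x) <= 0 by rewrite pmulr_rle0 // subr_le0 ltW.
    lra.
  rewrite /hi.
  have : 0 <= (cmax - c e) * (1 + x) by rewrite mulr_ge0 // ?subr_ge0 // addr_ge0.
  nra.
have lam : forall T : {set 'I_m}, #|T| = s ->
    [/\ lo <= lambda_min ((colsubset A T)^T *m colsubset A T),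
        lambda_max ((colsubset A T)^T *m colsubset A T) <= hi &
        lambda_min ((colsubset A T)^T *m colsubset A T) <=
        lambda_max ((colsubset A T)^T *m colsubset A T)].
  move=> T Ts.
  have [a ea] := sym_eigen ((colsubset A T)^T *m colsubset A T) (ltac:(by rewrite Ts))
    (ltac:(by rewrite trmx_mul trmxK)).
  have [h1 h2 h3] := bnd_infsup [set a | eigenvalue ((colsubset A T)^T *m colsubset A T) a]
    lo hi (ex_intro _ a ea) (eig T Ts).
  split => //; have /andP [h4 h5] := h3 a ea; exact: le_trans h4 h5.
pose T0 := ((widen_ord sm) @: [set: 'I_s])%SET.
have T0s : #|T0| = s.
  rewrite card_imset; last by move=> u v /(congr1 val) /= uv; exact: val_inj.
  by rewrite cardsT card_ord.
have [lam1 lam2 lam3] := lam T0 T0s.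
set S1 := [set lambda_min ((colsubset A T)^T *m colsubset A T) | T in [set T : {set 'I_m} | #|T| = s]].
set S2 := [set lambda_max ((colsubset A T)^T *m colsubset A T) | T in [set T : {set 'I_m} | #|T| = s]].
have S1b : forall a, S1 a -> lo <= a <= hi.
  move=> _ [T Ts <-]; have [l1 l2 l3] := lam T Ts.
  by rewrite l1 /= (le_trans l3 l2).
have S2b : forall a, S2 a -> lo <= a <= hi.
  move=> _ [T Ts <-]; have [l1 l2 l3] := lam T Ts.
  by rewrite l2 andbT (le_trans l1 l3).
have [k1 _ k3] := bnd_infsup S1 lo hi (ex_intro _ _ (ex_intro2 _ _ T0 T0s erefl)) S1b.
have [_ k2 k4] := bnd_infsup S2 lo hi (ex_intro _ _ (ex_intro2 _ _ T0 T0s erefl)) S2b.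
have kk : kmin A s <= kmax A s.
  have /andP [h1 _] := k3 _ (ex_intro2 _ _ T0 T0s erefl).
  have /andP [_ h2] := k4 _ (ex_intro2 _ _ T0 T0s erefl).
  exact: le_trans h1 (le_trans lam3 h2).
have lokmin : lo <= kmin A s by [].
have kmaxhi : kmax A s <= hi by [].
clear k3 k4 S1b S2b.
move: lokmin kmaxhi kk; move: (kmin A s) (kmax A s) => K1 K2 lok1 k2hi k12.
have cmax0 : 0 < cmax by apply: lt_le_trans cminmax.
set rho := cmin / cmax in r0le *.
have rhoc : rho * cmax = cmin by rewrite /rho divfK // gt_eqF.
have lo0 : 0 <= lo by rewrite /lo le_max lexx.
have lo1 : cmin * (1 - x) <= lo by rewrite /lo le_max lexx orbT.
apply: (@le_trans _ _ (rho - 2 * x)); first lra.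
case: (lerP (rho - 2 * x) 0) => hr.
  apply: le_trans hr _; apply: divr_ge0; lra.
have rho1 : rho <= 1 by rewrite /rho ler_pdivrMr // mul1r.
have x1 : 0 < 1 - x by lra.
have K10 : 0 < K1.
  apply: lt_le_trans lok1; apply: lt_le_trans lo1; exact: mulr_gt0.
have K20 : 0 < K2 by apply: lt_le_trans k12.
rewrite ler_pdivlMr //.
have h1 := ler_wpM2l (ltW hr) k2hi.
have e1 : (rho - 2 * x) * hi = (cmin - 2 * x * cmax) * (1 + x) by rewrite /hi -rhoc; ring.
have h2 : 0 <= x * (cmax - cmin) by rewrite mulr_ge0 // subr_ge0.
have h3 : 0 <= x * x * cmax by rewrite !mulr_ge0 // ltW.
nra.
Qed.
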